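(* For every finite graph $G=(V,E)$, \[ d_{\mathrm{swap}}(G) \ge \left\lceil \frac{b^2(G) - 2}{2} \right\rceil. \]
   Context: Linear-connectivity swap network model: for $G=(V,E)$ with $|V|=n$, qubits occupy positions $0,\ldots,n-1$ on a line; a configuration is a bijection $\pi:V\to\{0,\ldots,n-1\}$; a swap layer is a set of pairwise disjoint pairs of adjacent positions $\{i,i+1\}$, and applying it exchanges the vertices at the two positions of each pair. A swap network for $G$ is an initial configuration $\pi_0$ (chosen freely) followed by swap layers $L_1,\ldots,L_d$ producing configurations $\pi_0,\ldots,\pi_d$, such that for every edge $\{v,w\}\in E$ there is some $t$ with $|\pi_t(v)-\pi_t(w)|=1$. Its swap depth is $d$, and $d_{\mathrm{swap}}(G)$ is the minimum swap depth over all swap networks for $G$. An order of $V$ is a bijection $r: V \to \{0,\ldots,|V|-1\}$; $R(V)$ is the set of all orders. For $W\subseteq V$, the order bandwidth is $b_r(W)=\max_{w\in W} r(w)-\min_{w\in W} r(w)$. Let $L_2(G)$ be the set of subgraphs of $G$ that are paths with two edges (three distinct vertices $v_1,v_2,v_3$ with $\{v_1,v_2\},\{v_2,v_3\}\in E$), and for $S\in L_2(G)$ let $V_S$ be its vertex set. The graph 2-bandwidth is $b^2(G)=\min_{r\in R(V)}\max_{S\in L_2(G)} b_r(V_S)$. *)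

(* Defs.v *)
From mathcomp Require Import all_boot.
Set Implicit Arguments. Unset Strict Implicit. Unset Printing Implicit Defensive.

(* A finite simple graph: vertex type T : finType, edge relation e : rel T
   (assumed symmetric and irreflexive in the theorem). Positions are
   0, ..., #|T|-1. *)

(* A swap layer is a list of positions i, each standing for the pair {i, i+1}. *)
Definition valid_layer (n : nat) (L : seq nat) : bool :=
  all (fun i => i.+1 < n) L &&
  all (fun i => all (fun j => (i == j) || (i.+1 < j) || (j.+1 < i)) L) L.

Definition swap_pos (L : seq nat) (p : nat) : nat :=
  if p \in L then p.+1
  else if (0 < p) && (p.-1 \in L) then p.-1 else p.

Definition apply_layer (T : Type) (pi : T -> nat) (L : seq nat) : T -> nat :=
  fun v => swap_pos L (pi v).

Definition config_at (T : Type) (pi0 : T -> nat) (Ls : seq (seq nat)) (t : nat)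
  : T -> nat := foldl (@apply_layer T) pi0 (take t Ls).

Definition adjacent_pos (a b : nat) : bool := (a == b.+1) || (b == a.+1).

Definition is_swap_network (T : finType) (e : rel T)
  (pi0 : {ffun T -> 'I_#|T|}) (Ls : seq (seq nat)) : Prop :=
  injective pi0 /\
  all (valid_layer #|T|) Ls /\
  (forall v w, e v w ->
     exists t, t <= size Ls /\
       adjacent_pos (config_at (fun x => nat_of_ord (pi0 x)) Ls t v)
                    (config_at (fun x => nat_of_ord (pi0 x)) Ls t w)).

Definition bw3 (T : finType) (r : {ffun T -> 'I_#|T|}) (a b c : T) : nat :=
  maxn (maxn (r a) (r b)) (r c) - minn (minn (r a) (r b)) (r c).

Definition order_cost (T : finType) (e : rel T) (r : {ffun T -> 'I_#|T|}) : nat :=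
  \max_(x : T * T * T | [&& x.1.1 != x.1.2, x.1.2 != x.2, x.1.1 != x.2,
                          e x.1.1 x.1.2 & e x.1.2 x.2])
     bw3 r x.1.1 x.1.2 x.2.

(* b^2(G) = min over orders r (bijections V -> {0..n-1}). The default #|T| of
   the min is never reached when T is nonempty-or-empty, since an order exists
   and every cost is < #|T| (or = 0). *)
Definition b2 (T : finType) (e : rel T) : nat :=
  \big[minn/#|T|]_(r : {ffun T -> 'I_#|T|} | injectiveb r) order_cost e r.

(* Main.v *)
Require Import Defs.
From mathcomp Require Import all_boot.
From mathcomp Require Import zify.

Lemma bigmin_le (I : eqType) (s : seq I) (P : pred I) (F : I -> nat) x i0 :
  i0 \in s -> P i0 -> \big[minn/x]_(i <- s | P i) F i <= F i0.
Proof.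
elim: s => [|a s IH] //= Hin HP; rewrite big_cons.
rewrite in_cons in Hin; case/orP: Hin => [/eqP <- | Hin].
  by rewrite HP geq_minl.
case: (P a); last exact: IH.
by apply: leq_trans (geq_minr _ _) (IH Hin HP).
Qed.

Lemma swap_pos_le L p : swap_pos L p <= p.+1 /\ p <= (swap_pos L p).+1.
Proof.
rewrite /swap_pos; case: (p \in L); first lia.
case: ifP => [/andP [H _]|_]; lia.
Qed.

Lemma config_step (T : Type) (pi0 : T -> nat) Ls t u :
  config_at pi0 Ls t.+1 u <= (config_at pi0 Ls t u).+1 /\
  config_at pi0 Ls t u <= (config_at pi0 Ls t.+1 u).+1.
Proof.
rewrite /config_at.
case: (ltnP t (size Ls)) => Ht.
  rewrite (take_nth [::] Ht) foldl_rcons /apply_layer.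
  exact: swap_pos_le.
rewrite !take_oversize //; last exact: leqW.
Qed.

Lemma config_move (T : Type) (pi0 : T -> nat) Ls s t u : s <= t ->
  config_at pi0 Ls t u <= config_at pi0 Ls s u + (t - s) /\
  config_at pi0 Ls s u <= config_at pi0 Ls t u + (t - s).
Proof.
move=> /subnK <-; elim: (t - s) => [|k IH]; first by rewrite add0n; lia.
have := @config_step T pi0 Ls (k + s) u.
rewrite addSn. lia.
Qed.

Lemma key (T : Type) (P : nat -> T -> nat) d a b c t1 t2 :
  (forall s t u, s <= t -> P t u <= P s u + (t - s) /\ P s u <= P t u + (t - s)) ->
  t1 <= d -> t2 <= d -> adjacent_pos (P t1 a) (P t1 b) ->
  adjacent_pos (P t2 b) (P t2 c) ->
  maxn (maxn (P 0 a) (P 0 b)) (P 0 c) - minn (minn (P 0 a) (P 0 b)) (P 0 c)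
    <= d.*2 + 2.
Proof.
move=> HM H1 H2; rewrite /adjacent_pos.
have Ma1 := HM _ _ a (leq0n t1).
have Mb1 := HM _ _ b (leq0n t1).
have Mb2 := HM _ _ b (leq0n t2).
have Mc2 := HM _ _ c (leq0n t2).
case: (leqP t1 t2) => H;
  [have Mb := HM _ _ b H | have Mb := HM _ _ b (ltnW H)];
move=> /orP [/eqP E1 | /eqP E1] /orP [/eqP E2 | /eqP E2]; lia.
Qed.

Theorem lemma2 (T : finType) (e : rel T)
  (e_sym : symmetric e) (e_irr : irreflexive e)
  (pi0 : {ffun T -> 'I_#|T|}) (Ls : seq (seq nat)) :
  is_swap_network e pi0 Ls ->
  (b2 e - 2 + 1) %/ 2 <= size Ls.
Proof.
case=> Hinj [_ Hedge].
set d := size Ls.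
suff: b2 e <= d.*2 + 2 by rewrite -muln2; lia.
apply: (@leq_trans (order_cost e pi0)).
  apply: bigmin_le; first by rewrite mem_index_enum.
  exact/injectiveP.
apply/bigmax_leqP => [[[a b] c]] /= /and5P [_ _ _ Hab Hbc].
have [t1 [Ht1 Ha1]] := Hedge _ _ Hab.
have [t2 [Ht2 Ha2]] := Hedge _ _ Hbc.
have H0 : forall u, config_at (fun x => nat_of_ord (pi0 x)) Ls 0 u = pi0 u.
  by move=> u; rewrite /config_at take0.
have := @key _ _ _ _ _ _ _ _ (@config_move T (fun x => nat_of_ord (pi0 x)) Ls) Ht1 Ht2 Ha1 Ha2.
by rewrite !H0.
Qed.
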